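(* Under the standing assumptions below, let $P_j\in Y$ denote the $j$-th column $(P_{ij})_{i\in\mathbb{N}}$ of $P$ and $P_i^\top\in Y^*$ the $i$-th row, acting by $y\mapsto\sum_jP_{ij}y_j$. Then: 1. each $P_j$ is an eigenvector of $\tilde T$ with eigenvalue $-a_j$; 2. each $P_i^\top$ is an eigenvector of the adjoint $\tilde T^*:Y^*\to Y^*$ with eigenvalue $-a_i$.
   Context: Standing assumptions: $X$ is one of $\ell^p$ ($1\le p\le\infty$), $c$, $c_0$; $(a_n)$ strictly decreasing positive reals, $a_n\to0$; $b=(b_n)\in X$ with $b_n>0$; $\pi_n:=2\prod_{m\ge1,\,m\ne n}\frac{1+a_m/a_n}{1-a_m/a_n}$ with $\pi\in\ell^\infty$; $\phi_{ij}:=\frac{b_i/b_j}{1+a_i/a_j}$ satisfies $\phi_{ij}\le C\mu^{|i-j|}$ for some $C>0$, $\mu\in(0,1)$. $Y:=\{(y_n)\mid(b_ny_n)\in X\}$ with $\|y\|_Y:=\|(b_ny_n)\|_X$. $P_{ij}:=\frac{a_j\pi_j}{a_i+a_j}$. $A:Y\to Y$ is $(y_n)\mapsto(a_ny_n)$, $\tilde k:=(-a_n\pi_n)$ acting on $Y$ by $y\mapsto\sum_n\tilde k_ny_n$, $\mathbf{1}$ the all-ones sequence, and $\tilde T:=A+\mathbf{1}\tilde k:Y\to Y$, $y\mapsto Ay+(\tilde ky)\mathbf{1}$. *)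

(* Defs.v *)
From Stdlib Require Import Reals.
From Coquelicot Require Import Coquelicot.
Open Scope R_scope.

(* Sequences are indexed by nat starting at 0 (the paper starts at 1). *)

Inductive seqspace : Type :=
  | SLp (p : R)
  | SLinf
  | Sc
  | Sc0.

Definition valid_space (X : seqspace) : Prop :=
  match X with SLp p => 1 <= p | _ => True end.

(* |x|^p with the convention 0^p = 0 (p > 0). *)
Definition rpow_abs (x p : R) : R :=
  if Req_EM_T x 0 then 0 else Rpower (Rabs x) p.

Definition in_X (X : seqspace) (x : nat -> R) : Prop :=
  match X with
  | SLp p => ex_series (fun n => rpow_abs (x n) p)
  | SLinf => exists M, forall n, Rabs (x n) <= M
  | Sc => exists l : R, is_lim_seq x l
  | Sc0 => is_lim_seq x 0
  end.

Definition norm_X (X : seqspace) (x : nat -> R) : R :=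
  match X with
  | SLp p => rpow_abs (Series (fun n => rpow_abs (x n) p)) (1 / p)
  | _ => real (Sup_seq (fun n => Finite (Rabs (x n))))
  end.

Definition in_Y (X : seqspace) (b : nat -> R) (y : nat -> R) : Prop :=
  in_X X (fun n => b n * y n).

Definition norm_Y (X : seqspace) (b : nat -> R) (y : nat -> R) : R :=
  norm_X X (fun n => b n * y n).

Fixpoint pprod (a : nat -> R) (n N : nat) : R :=
  match N with
  | O => 1
  | S N' => pprod a n N' *
      (if Nat.eq_dec N' n then 1 else (1 + a N' / a n) / (1 - a N' / a n))
  end.

Definition is_pi (a : nat -> R) (pi : nat -> R) : Prop :=
  forall n, is_lim_seq (fun N => 2 * pprod a n N) (pi n).

Definition absdiff (i j : nat) : nat := (i - j + (j - i))%nat.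

Definition phi (a b : nat -> R) (i j : nat) : R := (b i / b j) / (1 + a i / a j).

Definition Pmat (a pi : nat -> R) (i j : nat) : R := a j * pi j / (a i + a j).

Definition ktilde (a pi : nat -> R) (y : nat -> R) : R :=
  Series (fun n => - a n * pi n * y n).

Definition Ttilde (a pi : nat -> R) (y : nat -> R) : nat -> R :=
  fun i => a i * y i + ktilde a pi y.

Definition Prow (a pi : nat -> R) (i : nat) (y : nat -> R) : R :=
  Series (fun j => Pmat a pi i j * y j).

Definition eigvec_Ttilde (X : seqspace) (a b pi : nat -> R) (v : nat -> R) (lam : R) : Prop :=
  in_Y X b v /\ (exists i, v i <> 0) /\
  ex_series (fun n => - a n * pi n * v n) /\
  (forall i, Ttilde a pi v i = lam * v i).

(* f (given by a series formula) is an element of Y^* (continuous linear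
   functional: the series converges on Y and is bounded by C ||y||_Y),
   nonzero, and an eigenvector of the adjoint: Ttilde^* f = f o Ttilde = lam f. *)
Definition eigvec_adjoint (X : seqspace) (a b pi : nat -> R) (c : nat -> R) (lam : R) : Prop :=
  let f := fun y => Series (fun j => c j * y j) in
  (forall y, in_Y X b y -> ex_series (fun j => c j * y j)) /\
  (exists C, forall y, in_Y X b y -> Rabs (f y) <= C * norm_Y X b y) /\
  (exists y, in_Y X b y /\ f y <> 0) /\
  (forall y, in_Y X b y -> f (Ttilde a pi y) = lam * f y).

(* Main.v *)
Require Import Defs.
From Stdlib Require Import Reals Lra Lia.
From Coquelicot Require Import Coquelicot.
Open Scope R_scope.

Fixpoint psum (f : nat -> R) (N : nat) : R :=
  match N with O => 0 | S N' => psum f N' + f N' end.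

Lemma psum_ext f g N : (forall n, (n < N)%nat -> f n = g n) -> psum f N = psum g N.
Proof. induction N; simpl; intros H; auto. rewrite IHN by (intros; apply H; lia). rewrite H by lia; auto. Qed.
Lemma psum_plus f g N : psum (fun n => f n + g n) N = psum f N + psum g N.
Proof. induction N; simpl; [lra|rewrite IHN; lra]. Qed.
Lemma psum_scal c f N : psum (fun n => c * f n) N = c * psum f N.
Proof. induction N; simpl; [lra|rewrite IHN; lra]. Qed.
Lemma psum_sum_n f N : sum_n f N = psum f (S N).
Proof. induction N; simpl. rewrite sum_O; simpl; lra. rewrite sum_Sn, IHN. simpl. reflexivity. Qed.
Lemma psum_split f K d : psum f (K + d) = psum f K + psum (fun k => f (K + k)%nat) d.
Proof. induction d; simpl. rewrite Nat.add_0_r; lra. rewrite Nat.add_succ_r; simpl; rewrite IHd; lra. Qed.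
Lemma psum_abs_le f h d : (forall k, (k < d)%nat -> Rabs (f k) <= h k) -> Rabs (psum f d) <= psum h d.
Proof. induction d; simpl; intros H. rewrite Rabs_R0; lra.
  eapply Rle_trans; [apply Rabs_triang|]. assert (Rabs (psum f d) <= psum h d) by (apply IHd; intros; apply H; lia).
  specialize (H d ltac:(lia)). lra. Qed.

Lemma a_lt (a : nat -> R) : (forall n, a (S n) < a n) -> forall m n, (m < n)%nat -> a n < a m.
Proof. intros H m n Hmn. induction Hmn. apply H. specialize (H m0). lra. Qed.

Lemma a_neq (a : nat -> R) : (forall n, a (S n) < a n) -> forall m n, m <> n -> a m <> a n.
Proof. intros H m n Hmn. destruct (Nat.lt_gt_cases m n) as [[h|h] _]; auto;
  [pose proof (a_lt a H m n h)| pose proof (a_lt a H n m h)]; lra. Qed.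

Fixpoint G (a : nat -> R) (N : nat) (z : R) : R :=
  match N with O => 1 | S N' => G a N' z * ((z + a N') / (z - a N')) end.

Lemma pprod_G a (hp : forall n, 0 < a n) (hi : forall m n, m <> n -> a m <> a n) N n :
  (N <= n)%nat -> pprod a n N = G a N (a n).
Proof.
  induction N; simpl; intros H; auto.
  destruct (Nat.eq_dec N n) as [e|e]; [lia|]. rewrite IHN by lia.
  f_equal. pose proof (hp n). pose proof (hi N n e).
  field. split; [lra|]. intro h. apply H1. field_simplify in h; lra.
Qed.

Lemma pf_identity a (hp : forall n, 0 < a n) (hi : forall m n, m <> n -> a m <> a n) N :
  forall z, (forall m, (m < N)%nat -> z <> a m) ->
  G a N z = 1 + psum (fun n => 2 * a n * pprod a n N / (z - a n)) N.
Proof.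
  induction N; intros z Hz; simpl. lra.
  assert (HzN : z <> a N) by (apply Hz; lia).
  rewrite IHN by (intros; apply Hz; lia).
  assert (HaN : pprod a N N = 1 + psum (fun n => 2 * a n * pprod a n N / (a N - a n)) N).
  { rewrite pprod_G by (auto; lia). apply IHN. intros m Hm. apply hi. lia. }
  destruct (Nat.eq_dec N N) as [_|e]; [|congruence]. rewrite Rmult_1_r, HaN.
  rewrite (psum_ext (fun n => 2 * a n * (pprod a n N * (if Nat.eq_dec N n then 1 else (1 + a N / a n) / (1 - a N / a n))) / (z - a n))
     (fun n => (2 * a n * pprod a n N / (z - a n)) * ((z + a N) / (z - a N)) + (- (2 * a N / (z - a N))) * (2 * a n * pprod a n N / (a N - a n)))).
  2:{ intros n Hn. destruct (Nat.eq_dec N n) as [e|e]; [lia|].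
      assert (z <> a n) by (apply Hz; lia). assert (a N <> a n) by (apply hi; lia). pose proof (hp n). pose proof (hp N).
      field. repeat split; try (intro h; apply H0; lra); try lra. }
  rewrite psum_plus, psum_scal.
  set (S1 := psum (fun n => 2 * a n * pprod a n N / (a N - a n)) N).
  rewrite (psum_ext (fun n => 2 * a n * pprod a n N / (z - a n) * ((z + a N) / (z - a N))) (fun n => ((z + a N) / (z - a N)) * (2 * a n * pprod a n N / (z - a n)))) by (intros; ring).
  rewrite psum_scal.
  set (S2 := psum (fun n => 2 * a n * pprod a n N / (z - a n)) N).
  field. intro h; apply HzN; lra.
Qed.

Lemma G_zero a N j : (j < N)%nat -> G a N (- a j) = 0.
Proof. induction N; simpl; intros H. lia.
  destruct (Nat.eq_dec j N) as [->|e]. replace (- a N + a N) with 0 by ring. unfold Rdiv; ring.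
  rewrite IHN by lia. ring. Qed.

Lemma finite_identity a (hp : forall n, 0 < a n) (hi : forall m n, m <> n -> a m <> a n) N j :
  (j < N)%nat -> psum (fun n => a n * (2 * pprod a n N) / (a n + a j)) N = 1.
Proof.
  intros Hj. pose proof (pf_identity a hp hi N (- a j)) as H.
  rewrite G_zero in H by auto.
  assert (H' : 0 = 1 + psum (fun n => 2 * a n * pprod a n N / (- a j - a n)) N).
  { apply H. intros m _. pose proof (hp m); pose proof (hp j); lra. }
  rewrite (psum_ext _ (fun n => -1 * (2 * a n * pprod a n N / (- a j - a n)))).
  rewrite psum_scal. lra.
  intros n _. pose proof (hp n); pose proof (hp j). field. lra.
Qed.

Lemma factor_ge1 t : 0 < t -> t <> 1 -> 1 <= Rabs ((1 + t) / (1 - t)).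
Proof.
  intros Ht H1. destruct (Rlt_le_dec t 1).
  - rewrite Rabs_right. apply Rmult_le_reg_r with (1 - t); [lra|]. unfold Rdiv. rewrite Rmult_assoc, Rinv_l by lra. lra.
    apply Rle_ge. apply Rmult_le_pos; [lra|]. left; apply Rinv_0_lt_compat; lra.
  - assert (t > 1) by lra.
    rewrite Rabs_left. apply Rmult_le_reg_r with (t - 1); [lra|].
    replace (- ((1 + t) / (1 - t)) * (t - 1)) with (1 + t) by (field; lra). lra.
    replace ((1 + t) / (1 - t)) with (- ((1 + t) / (t - 1))) by (field; lra).
    apply Ropp_lt_gt_0_contravar. apply Rdiv_lt_0_compat; lra.
Qed.

Lemma pprod_mono a (hp : forall n, 0 < a n) (hi : forall m n, m <> n -> a m <> a n) n N :
  Rabs (pprod a n N) <= Rabs (pprod a n (S N)).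
Proof.
  simpl. rewrite Rabs_mult. destruct (Nat.eq_dec N n) as [e|e]. rewrite Rabs_R1; lra.
  rewrite <- (Rmult_1_r (Rabs (pprod a n N))) at 1. apply Rmult_le_compat_l. apply Rabs_pos.
  apply factor_ge1. pose proof (hp N); pose proof (hp n). apply Rdiv_lt_0_compat; lra.
  intro h. apply (hi N n e). pose proof (hp n). apply (f_equal (fun x => x * a n)) in h.
  unfold Rdiv in h. rewrite Rmult_assoc, Rinv_l in h by lra. lra.
Qed.

Lemma pprod_ge1 a (hp : forall n, 0 < a n) (hi : forall m n, m <> n -> a m <> a n) n N :
  1 <= Rabs (pprod a n N).
Proof. induction N. simpl; rewrite Rabs_R1; lra. eapply Rle_trans; [apply IHN|apply pprod_mono; auto]. Qed.

Lemma pprod_mono' a (hp : forall n, 0 < a n) (hi : forall m n, m <> n -> a m <> a n) n N k :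
  Rabs (pprod a n N) <= Rabs (pprod a n (N + k)).
Proof. induction k. rewrite Nat.add_0_r; lra. rewrite Nat.add_succ_r. eapply Rle_trans; [apply IHk|apply pprod_mono; auto]. Qed.

Lemma pi_bound a pi (hp : forall n, 0 < a n) (hi : forall m n, m <> n -> a m <> a n) (hpi : is_pi a pi) n N :
  Rabs (2 * pprod a n N) <= Rabs (pi n).
Proof.
  pose proof (is_lim_seq_abs _ _ (hpi n)) as H. simpl in H.
  assert (Hc := is_lim_seq_const (Rabs (2 * pprod a n N))).
  assert (He : eventually (fun m => Rabs (2 * pprod a n N) <= Rabs (2 * pprod a n m))).
  { exists N; intros m Hm; replace m with (N + (m - N))%nat by lia.
     rewrite !Rabs_mult; apply Rmult_le_compat_l; [apply Rabs_pos| apply pprod_mono'; auto]. }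
  pose proof (is_lim_seq_le_loc _ _ _ _ He Hc H). simpl in H0. auto.
Qed.

Lemma pi_ge2 a pi (hp : forall n, 0 < a n) (hi : forall m n, m <> n -> a m <> a n) (hpi : is_pi a pi) n :
  2 <= Rabs (pi n).
Proof. eapply Rle_trans; [|apply (pi_bound a pi hp hi hpi n 0)]. rewrite Rabs_mult. pose proof (pprod_ge1 a hp hi n 0).
  rewrite Rabs_right by lra. lra. Qed.

Lemma pow_le_1' mu n : 0 <= mu <= 1 -> mu ^ n <= 1.
Proof. intros H; induction n; simpl; [lra|]. pose proof (pow_le mu n (proj1 H)). nra. Qed.

Lemma pow_anti mu k m : 0 <= mu <= 1 -> (k <= m)%nat -> mu ^ m <= mu ^ k.
Proof. intros H Hkm. replace m with (k + (m - k))%nat by lia. rewrite pow_add.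
  pose proof (pow_le mu k (proj1 H)). pose proof (pow_le_1' mu (m-k) H). nra. Qed.

Lemma absdiff_pow mu i j : 0 < mu <= 1 -> mu ^ absdiff i j * mu ^ i <= mu ^ j.
Proof. intros H. rewrite <- pow_add. apply pow_anti; [lra|]. unfold absdiff; lia. Qed.

Lemma absdiff_0n n : absdiff 0 n = n. Proof. unfold absdiff; lia. Qed.
Lemma absdiff_n0 n : absdiff n 0 = n. Proof. unfold absdiff; lia. Qed.

Section PhiBounds.
Variables (a b pi : nat -> R) (C mu : R).
Hypothesis (hp : forall n, 0 < a n) (hd : forall n, a (S n) < a n) (hb : forall n, 0 < b n)
  (hC : 0 < C) (hmu : 0 < mu < 1) (hphi : forall i j, phi a b i j <= C * mu ^ absdiff i j).

Lemma a_le0 n : a n <= a 0.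
Proof. destruct n. lra. left; apply (a_lt a hd); lia. Qed.

Lemma ab_bound n : a n / b n <= (2 * C * a 0 / b 0) * mu ^ n.
Proof.
  pose proof (hphi 0 n) as H. rewrite absdiff_0n in H. unfold phi in H.
  pose proof (hp n); pose proof (hp 0%nat); pose proof (hb n); pose proof (hb 0%nat); pose proof (a_le0 n).
  pose proof (pow_lt mu n (proj1 hmu)).
  replace (b 0%nat / b n / (1 + a 0%nat / a n)) with ((b 0%nat * a n) / (b n * (a n + a 0%nat))) in H by (field; lra).
  apply Rmult_le_reg_r with (b 0%nat); auto.
  replace (a n / b n * b 0%nat) with ((b 0%nat * a n) / (b n * (a n + a 0%nat)) * (a n + a 0%nat)) by (field; lra).
  replace (2 * C * a 0%nat / b 0%nat * mu ^ n * b 0%nat) with ((C * mu ^ n) * (2 * a 0%nat)) by (field; lra).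
  apply Rmult_le_compat; try lra. apply Rlt_le, Rdiv_lt_0_compat; nra.
Qed.

Lemma b_bound n : b n <= (2 * C * b 0%nat) * mu ^ n.
Proof.
  pose proof (hphi n 0) as H. rewrite absdiff_n0 in H. unfold phi in H.
  pose proof (hp n); pose proof (hp 0%nat); pose proof (hb n); pose proof (hb 0%nat); pose proof (a_le0 n).
  pose proof (pow_lt mu n (proj1 hmu)).
  replace (b n / b 0%nat / (1 + a n / a 0%nat)) with (b n / (b 0%nat * (1 + a n / a 0%nat))) in H by (field; lra).
  assert (0 < b 0%nat * (1 + a n / a 0%nat)). { apply Rmult_lt_0_compat; auto. pose proof (Rdiv_lt_0_compat _ _ H0 H1). lra. }
  assert (a n / a 0%nat <= 1). { apply Rmult_le_reg_r with (a 0%nat); auto. unfold Rdiv; rewrite Rmult_assoc, Rinv_l; lra. }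
  set (D := b 0%nat * (1 + a n / a 0%nat)) in *.
  replace (b n) with (b n / D * D) by (field; lra).
  eapply Rle_trans. apply Rmult_le_compat_r; [lra|apply H]. unfold D.
  assert (0 < C * mu ^ n * b 0%nat) by (repeat apply Rmult_lt_0_compat; auto).
  set (t := a n / a 0%nat) in *. nra.
Qed.

Lemma a_bound n : a n <= (4 * C * C * a 0%nat) * mu ^ n.
Proof.
  pose proof (ab_bound n); pose proof (b_bound n). pose proof (hb n); pose proof (hb 0%nat).
  pose proof (pow_lt mu n (proj1 hmu)). pose proof (pow_le_1' mu n ltac:(lra)).
  replace (a n) with (a n / b n * b n) by (field; lra).
  assert (0 <= a n / b n) by (apply Rlt_le, Rdiv_lt_0_compat; auto).
  eapply Rle_trans. apply Rmult_le_compat; [auto|lra|apply H|apply H0].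
  replace (2 * C * a 0%nat / b 0%nat * mu ^ n * (2 * C * b 0%nat * mu ^ n)) with ((4 * C * C * a 0%nat) * mu ^ n * mu ^ n) by (field; lra).
  pose proof (hp 0%nat). assert (0 <= 4 * C * C * a 0%nat * mu ^ n) by (repeat apply Rmult_le_pos; lra).
  nra.
Qed.

Lemma P_phi i j : Pmat a pi i j * b i = pi j * b j * phi a b i j.
Proof. unfold Pmat, phi. pose proof (hp i); pose proof (hp j); pose proof (hb j). field; lra. Qed.

Lemma phi_pos i j : 0 <= phi a b i j.
Proof. unfold phi. pose proof (hp i); pose proof (hp j); pose proof (hb j); pose proof (hb i).
  apply Rlt_le, Rdiv_lt_0_compat. apply Rdiv_lt_0_compat; auto. pose proof (Rdiv_lt_0_compat _ _ H H0). lra. Qed.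

End PhiBounds.

Lemma psum_geom mu d : mu <> 1 -> psum (fun k => mu ^ k) d = (1 - mu ^ d) / (1 - mu).
Proof. intros H. induction d; simpl. field; lra. rewrite IHd. field. lra. Qed.

Lemma psum_geom_le mu d : 0 < mu < 1 -> psum (fun k => mu ^ k) d <= 1 / (1 - mu).
Proof. intros H. rewrite psum_geom by lra. pose proof (pow_le mu d ltac:(lra)).
  unfold Rdiv. apply Rmult_le_compat_r. left; apply Rinv_0_lt_compat; lra. lra. Qed.

Lemma psum_lim (f : nat -> nat -> R) (g : nat -> R) K :
  (forall n, is_lim_seq (fun N => f N n) (g n)) -> is_lim_seq (fun N => psum (f N) K) (psum g K).
Proof. intros H. induction K; simpl. apply is_lim_seq_const. apply (is_lim_seq_plus' _ _ _ _ IHK (H K)). Qed.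

Lemma is_series_of_lim (t : nat -> R) (l : R) : is_lim_seq (sum_n t) l -> is_series t l.
Proof. intros H. exact H. Qed.

Section MainIdentity.
Variables (a pi : nat -> R) (K M mu : R).
Hypothesis (hp : forall n, 0 < a n) (hd : forall n, a (S n) < a n) (hpi : is_pi a pi)
  (hM : forall n, Rabs (pi n) <= M) (hmu : 0 < mu < 1) (hK : 0 <= K) (haK : forall n, a n <= K * mu ^ n).

Let hi := a_neq a hd.

Lemma partial_bound j K0 : Rabs (psum (fun n => a n * pi n / (a n + a j)) K0 - 1) <= (K * M / a j) * mu ^ K0 / (1 - mu).
Proof.
  set (x := a j). assert (hx : 0 < x) by apply hp.
  set (u := fun N n => a n * (2 * pprod a n N) / (a n + x)).
  set (t := fun n => a n * pi n / (a n + x)).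
  set (E := K * M / x).
  assert (HM0 : 0 <= M) by (eapply Rle_trans; [apply Rabs_pos|apply (hM 0%nat)]).
  assert (hE : 0 <= E) by (unfold E; apply Rmult_le_pos; [nra|left; apply Rinv_0_lt_compat; auto]).
  assert (Hu : forall N n, Rabs (u N n) <= E * mu ^ n).
  { intros N n. unfold u, E. pose proof (hp n). pose proof (haK n).
    pose proof (pi_bound a pi hp hi hpi n N) as Hpb. pose proof (hM n) as HMn.
    rewrite Rabs_div by lra. rewrite Rabs_mult, (Rabs_right (a n)), (Rabs_right (a n + x)) by lra.
    unfold Rdiv. 
    apply Rle_trans with (a n * M * / x).
    - rewrite Rmult_assoc, (Rmult_assoc (a n)). apply Rmult_le_compat_l; [lra|].
      apply Rmult_le_compat. apply Rabs_pos. left; apply Rinv_0_lt_compat; lra. lra.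
      apply Rinv_le_contravar; lra.
    - replace (K * M * / x * mu ^ n) with (K * mu ^ n * M * / x) by ring.
      apply Rmult_le_compat_r. left; apply Rinv_0_lt_compat; auto. apply Rmult_le_compat_r; auto. }
  assert (Hev : eventually (fun N => Rabs (psum (u N) K0 - 1) <= E * mu ^ K0 / (1 - mu))).
  { exists (S j + K0)%nat. intros N HN.
    pose proof (finite_identity a hp hi N j ltac:(lia)) as H1. fold x in H1. change (psum (u N) N = 1) in H1.
    assert (HN' : psum (u N) N = psum (u N) (K0 + (N - K0))) by (f_equal; lia).
    rewrite HN', psum_split in H1.
    assert (Ht : Rabs (psum (fun k => u N (K0 + k)%nat) (N - K0)) <= psum (fun k => E * mu ^ K0 * mu ^ k) (N - K0)).
    { apply psum_abs_le. intros k _. rewrite Rmult_assoc, <- pow_add. apply Hu. }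
    rewrite psum_scal in Ht. pose proof (psum_geom_le mu (N - K0) hmu).
    assert (0 <= E * mu ^ K0) by (apply Rmult_le_pos; auto; apply pow_le; lra).
    
    assert (Hr : psum (u N) K0 - 1 = - psum (fun k => u N (K0 + k)%nat) (N - K0)) by lra. rewrite Hr, Rabs_Ropp. unfold Rdiv in *. rewrite Rmult_1_l in *. eapply Rle_trans; [apply Ht|]. apply Rmult_le_compat_l; [exact H0|exact H]. }
  assert (Hl : is_lim_seq (fun N => Rabs (psum (u N) K0 - 1)) (Rabs (psum t K0 - 1))).
  { assert (Hpt : forall n, is_lim_seq (fun N => u N n) (t n)).
    { intros n. unfold u, t. unfold Rdiv.
    apply (is_lim_seq_mult' _ _ _ _); [|apply is_lim_seq_const].
    apply (is_lim_seq_mult' _ _ _ _ (is_lim_seq_const (a n)) (hpi n)). }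
    apply (is_lim_seq_abs _ (Finite (psum t K0 - 1))).
    apply (is_lim_seq_plus' _ _ _ _ (psum_lim u t K0 Hpt) (is_lim_seq_const (-1))). }
  pose proof (is_lim_seq_le_loc _ _ _ _ Hev Hl (is_lim_seq_const _)). simpl in H. exact H.
Qed.

Lemma main_identity j : is_series (fun n => a n * pi n / (a n + a j)) 1.
Proof.
  apply is_series_of_lim.
  set (c := (K * M / a j) * mu / (1 - mu)).
  assert (Hb : forall N, Rabs (sum_n (fun n => a n * pi n / (a n + a j)) N - 1) <= c * mu ^ N).
  { intros N. rewrite psum_sum_n. eapply Rle_trans; [apply partial_bound|]. unfold c. simpl. pose proof (hp j). right; field; lra. }
  assert (Hg : is_lim_seq (fun N => c * mu ^ N) 0).
  { replace 0 with (c * 0) by ring. apply (is_lim_seq_scal_l _ c (Finite 0)). apply is_lim_seq_geom. rewrite Rabs_right; lra. }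
  apply is_lim_seq_le_le with (u := fun N => 1 - c * mu ^ N) (w := fun N => 1 + c * mu ^ N).
  - intros N. specialize (Hb N). apply Rabs_le_between in Hb. lra.
  - replace (Finite 1) with (Finite (1 - 0)) by (f_equal; ring). apply (is_lim_seq_minus' _ _ _ _ (is_lim_seq_const 1) Hg).
  - replace (Finite 1) with (Finite (1 + 0)) by (f_equal; ring). apply (is_lim_seq_plus' _ _ _ _ (is_lim_seq_const 1) Hg).
Qed.

End MainIdentity.

Lemma Rpower_pow_comm mu p n : 0 < mu -> Rpower (mu ^ n) p = (Rpower mu p) ^ n.
Proof. intros H. rewrite <- (Rpower_pow n mu H), Rpower_mult, Rmult_comm, <- Rpower_mult.
  apply Rpower_pow. apply exp_pos. Qed.

Lemma Rpower_lt1 mu p : 0 < mu < 1 -> 0 < p -> Rpower mu p < 1.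
Proof. intros H Hp. unfold Rpower. rewrite <- exp_0. apply exp_increasing.
  assert (ln mu < 0). { rewrite <- ln_1. apply ln_increasing; lra. } nra. Qed.

Lemma rpow_abs_nonneg x p : 0 <= rpow_abs x p.
Proof. unfold rpow_abs. destruct (Req_EM_T x 0). lra. left; apply exp_pos. Qed.

Lemma geom_in_X X z D mu : valid_space X -> 0 < D -> 0 < mu < 1 ->
  (forall n, Rabs (z n) <= D * mu ^ n) -> in_X X z.
Proof.
  intros hX hD hmu H. assert (Hp1 : forall n, mu ^ n <= 1) by (intros; apply pow_le_1'; lra).
  assert (Hp0 : forall n, 0 < mu ^ n) by (intros; apply pow_lt; lra).
  destruct X; simpl in *.
  - assert (hp : 0 < p) by lra.
    apply (@ex_series_le R_AbsRing R_CompleteNormedModule _ (fun n => Rpower D p * (Rpower mu p) ^ n)).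
    + intros n. change (norm (rpow_abs (z n) p)) with (Rabs (rpow_abs (z n) p)).
      rewrite Rabs_right by (apply Rle_ge, rpow_abs_nonneg).
      rewrite <- Rpower_pow_comm by lra. rewrite Rpower_mult_distr by (auto; apply Hp0).
      unfold rpow_abs. destruct (Req_EM_T (z n) 0). left; apply exp_pos.
      apply Rle_Rpower_l. lra. split; [apply Rabs_pos_lt; auto|apply H].
    + apply (ex_series_scal_l (Rpower D p) (fun n => (Rpower mu p) ^ n)). apply ex_series_geom.
      pose proof (Rpower_lt1 mu p hmu hp). rewrite Rabs_right; [lra|]. left; apply exp_pos.
  - exists D. intros n. specialize (H n); specialize (Hp1 n). nra.
  - exists 0. apply is_lim_seq_le_le with (u := fun n => - (D * mu ^ n)) (w := fun n => D * mu ^ n).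
    intros n; specialize (H n); apply Rabs_le_between in H; lra.
    replace (Finite 0) with (Finite (- (D * 0))) by (f_equal; ring). apply (is_lim_seq_opp _ (Finite (D * 0))).
    apply (is_lim_seq_scal_l _ D (Finite 0)). apply is_lim_seq_geom. rewrite Rabs_right; lra.
    replace (Finite 0) with (Finite (D * 0)) by (f_equal; ring).
    apply (is_lim_seq_scal_l _ D (Finite 0)). apply is_lim_seq_geom. rewrite Rabs_right; lra.
  - apply is_lim_seq_le_le with (u := fun n => - (D * mu ^ n)) (w := fun n => D * mu ^ n).
    intros n; specialize (H n); apply Rabs_le_between in H; lra.
    replace (Finite 0) with (Finite (- (D * 0))) by (f_equal; ring). apply (is_lim_seq_opp _ (Finite (D * 0))).
    apply (is_lim_seq_scal_l _ D (Finite 0)). apply is_lim_seq_geom. rewrite Rabs_right; lra.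
    replace (Finite 0) with (Finite (D * 0)) by (f_equal; ring).
    apply (is_lim_seq_scal_l _ D (Finite 0)). apply is_lim_seq_geom. rewrite Rabs_right; lra.
Qed.

Lemma psum_nonneg f N : (forall n, 0 <= f n) -> 0 <= psum f N.
Proof. intros H; induction N; simpl; [lra|pose proof (H N); lra]. Qed.

Lemma psum_ge_term f n N : (forall k, 0 <= f k) -> (n < N)%nat -> f n <= psum f N.
Proof. intros H Hn. induction Hn; simpl. pose proof (psum_nonneg f n H); lra. pose proof (H m); lra. Qed.

Lemma series_ge_term f S n : (forall k, 0 <= f k) -> is_series f S -> f n <= S.
Proof.
  intros H HS. assert (Hl : is_lim_seq (sum_n f) S) by exact HS.
  assert (He : eventually (fun N => f n <= sum_n f N)).
  { exists n. intros N HN. rewrite psum_sum_n. apply psum_ge_term; auto; lia. }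
  pose proof (is_lim_seq_le_loc _ _ _ _ He (is_lim_seq_const (f n)) Hl). exact H0.
Qed.

Lemma sup_bound (u : nat -> R) M : (forall n, Rabs (u n) <= M) ->
  forall n, Rabs (u n) <= real (Sup_seq (fun n => Finite (Rabs (u n)))).
Proof.
  intros HM n. destruct (is_sup_seq_lub _ _ (Sup_seq_correct (fun n => Finite (Rabs (u n))))) as [Hub Hlub].
  assert (H1 : Rbar_le (Sup_seq (fun n => Finite (Rabs (u n)))) (Finite M)).
  { apply Hlub. intros x [k ->]. simpl. apply HM. }
  assert (H2 : Rbar_le (Finite (Rabs (u n))) (Sup_seq (fun n => Finite (Rabs (u n))))).
  { apply Sup_seq_minor_le with n. simpl. lra. }
  destruct (Sup_seq (fun n => Finite (Rabs (u n)))); simpl in *; auto; contradiction.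
Qed.

Lemma in_X_bound X z : valid_space X -> in_X X z -> forall n, Rabs (z n) <= norm_X X z.
Proof.
  intros hX Hz n. destruct X; simpl in *.
  - destruct Hz as [S HS]. assert (hp : 0 < p) by lra.
    assert (HS' : Series (fun n => rpow_abs (z n) p) = S) by (apply is_series_unique; exact HS).
    rewrite HS'.
    destruct (Req_EM_T (z n) 0) as [e|e].
    + rewrite e, Rabs_R0. apply rpow_abs_nonneg.
    + pose proof (series_ge_term _ _ n (fun k => rpow_abs_nonneg (z k) p) HS) as Hge.
      unfold rpow_abs in Hge. destruct (Req_EM_T (z n) 0); [contradiction|].
      assert (Hpos : 0 < Rpower (Rabs (z n)) p) by apply exp_pos.
      unfold rpow_abs. destruct (Req_EM_T S 0) as [e0|e0]; [lra|].
      rewrite <- (Rpower_1 (Rabs (z n))) at 1 by (apply Rabs_pos_lt; auto).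
      assert (E1 : Rpower (Rabs (z n)) 1 = Rpower (Rpower (Rabs (z n)) p) (1 / p)).
      { rewrite Rpower_mult. f_equal. field; lra. }
      rewrite E1. apply Rle_Rpower_l. left; apply Rdiv_lt_0_compat; lra. rewrite (Rabs_right S); lra.
  - destruct Hz as [M HM]. apply (sup_bound z M HM).
  - destruct Hz as [l Hl].
    destruct (filterlim_bounded (K:=R_AbsRing) (V:=R_NormedModule) z (ex_intro _ l Hl)) as [M HM].
    apply (sup_bound z M HM).
  - destruct (filterlim_bounded (K:=R_AbsRing) (V:=R_NormedModule) z (ex_intro _ 0 Hz)) as [M HM].
    apply (sup_bound z M HM).
Qed.

Lemma geom_series (w : nat -> R) E mu : 0 < mu < 1 -> (forall n, Rabs (w n) <= E * mu ^ n) ->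
  ex_series w /\ Rabs (Series w) <= E / (1 - mu).
Proof.
  intros hmu H.
  assert (Hg : is_series (fun n => E * mu ^ n) (E * / (1 - mu))).
  { apply (is_series_scal_l (K:=R_AbsRing) (V:=R_NormedModule) E (fun n => mu ^ n)). apply is_series_geom. rewrite Rabs_right; lra. }
  assert (Hab : ex_series (fun n => Rabs (w n))).
  { apply (@ex_series_le R_AbsRing R_CompleteNormedModule _ (fun n => E * mu ^ n)).
    intros n. change (norm (Rabs (w n))) with (Rabs (Rabs (w n))). rewrite Rabs_Rabsolu. apply H. exists (E * / (1 - mu)). exact Hg. }
  split. apply ex_series_Rabs; auto.
  eapply Rle_trans. apply Series_Rabs; auto.
  unfold Rdiv; rewrite <- (is_series_unique _ _ Hg). apply Series_le. intros n; split; [apply Rabs_pos|apply H]. exists (E * / (1 - mu)); exact Hg.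
Qed.

Lemma indicator_series (c : nat -> R) i :
  is_series (fun j => c j * (if Nat.eq_dec j i then 1 else 0)) (c i).
Proof.
  apply is_series_of_lim. apply (is_lim_seq_incr_n _ i).
  apply is_lim_seq_ext with (fun _ => c i); [|apply is_lim_seq_const].
  intros n. rewrite psum_sum_n.
  assert (Hg : forall d, psum (fun j => c j * (if Nat.eq_dec j i then 1 else 0)) (S i + d) = c i).
  { induction d. rewrite Nat.add_0_r. simpl. destruct (Nat.eq_dec i i) as [_|e]; [|congruence].
    rewrite (psum_ext _ (fun _ => 0 * 0)). rewrite psum_scal. ring.
    intros k Hk. destruct (Nat.eq_dec k i); [lia|ring].
    rewrite Nat.add_succ_r. cbn [psum]. rewrite IHd. destruct (Nat.eq_dec (S i + d) i); [lia|ring]. }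
  replace (S (n + i)) with (S i + n)%nat by lia. symmetry; apply Hg.
Qed.

Lemma absdiff_sym i j : absdiff i j = absdiff j i. Proof. unfold absdiff; lia. Qed.

Theorem proposition6 (X : seqspace) (a b pi : nat -> R)
  (hX : valid_space X)
  (ha_pos : forall n, 0 < a n)
  (ha_dec : forall n, a (S n) < a n)
  (ha_lim : is_lim_seq a 0)
  (hb_pos : forall n, 0 < b n)
  (hb_X : in_X X b)
  (hpi : is_pi a pi)
  (hpi_bdd : exists M, forall n, Rabs (pi n) <= M)
  (hphi : exists C mu, 0 < C /\ 0 < mu < 1 /\
            forall i j, phi a b i j <= C * mu ^ (absdiff i j)) :
  (forall j, eigvec_Ttilde X a b pi (fun i => Pmat a pi i j) (- a j)) /\
  (forall i, eigvec_adjoint X a b pi (fun j => Pmat a pi i j) (- a i)).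
Proof.
  destruct hpi_bdd as [M hM]. destruct hphi as [C [mu [hC [hmu hph]]]].
  pose proof (a_neq a ha_dec) as hi.
  assert (HM0 : 0 <= M) by (eapply Rle_trans; [apply Rabs_pos|apply (hM 0%nat)]).
  assert (haK : forall n, a n <= (4 * C * C * a 0%nat) * mu ^ n) by (intros; apply (a_bound a b C mu); auto).
  assert (hK : 0 <= 4 * C * C * a 0%nat) by (pose proof (ha_pos 0%nat); repeat apply Rmult_le_pos; lra).
  pose proof (main_identity a pi _ M mu ha_pos ha_dec hpi hM hmu hK haK) as hid.
  assert (Hmupos : forall n, 0 < mu ^ n) by (intros; apply pow_lt; lra).
  assert (Hpi2 : forall n, 2 <= Rabs (pi n)) by (intros; apply pi_ge2 with a; auto).
  assert (Hphi0 : forall i j, 0 <= phi a b i j) by (intros; apply (phi_pos a b); auto).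
  assert (Hpow : forall i j, mu ^ absdiff i j <= mu ^ j / mu ^ i).
  { intros i j. pose proof (absdiff_pow mu i j ltac:(lra)). pose proof (Hmupos i).
    apply Rmult_le_reg_r with (mu ^ i); auto. unfold Rdiv. rewrite Rmult_assoc, Rinv_l; lra. }
  split.
  - intros j.
    assert (Hk : is_series (fun n => - a n * pi n * Pmat a pi n j) (- (a j * pi j) * 1)).
    { apply (is_series_ext (fun n => scal (- (a j * pi j)) (a n * pi n / (a n + a j)))).
      intros n. unfold Pmat. change (scal ?x ?y) with (x * y). match goal with |- ?l = ?r => change (@eq R l r) end.
      pose proof (ha_pos n); pose proof (ha_pos j). field. lra.
      apply (is_series_scal_l (K:=R_AbsRing) (V:=R_NormedModule)). apply hid. }
    unfold eigvec_Ttilde. split; [|split; [|split]].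
    + unfold in_Y. apply geom_in_X with (D := Rabs (pi j) * b j * C / mu ^ j) (mu := mu); auto.
      * pose proof (Hpi2 j); pose proof (hb_pos j); pose proof (Hmupos j).
        apply Rdiv_lt_0_compat; auto. repeat apply Rmult_lt_0_compat; lra.
      * intros n. rewrite Rmult_comm, (P_phi a b pi); auto.
        rewrite !Rabs_mult, (Rabs_right (b j)), (Rabs_right (phi a b n j)) by (apply Rle_ge; auto; left; auto).
        pose proof (hph n j). rewrite absdiff_sym in H. pose proof (Hpow j n).
        pose proof (hb_pos j). pose proof (Rabs_pos (pi j)).
        apply Rle_trans with (Rabs (pi j) * b j * (C * mu ^ absdiff j n)).
        apply Rmult_le_compat_l; auto. apply Rmult_le_pos; lra.
        unfold Rdiv in *. replace (Rabs (pi j) * b j * C * / mu ^ j * mu ^ n) with (Rabs (pi j) * b j * (C * (mu ^ n * / mu ^ j))) by ring.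
        apply Rmult_le_compat_l. apply Rmult_le_pos; lra. apply Rmult_le_compat_l; lra.
    + exists j. unfold Pmat. pose proof (Hpi2 j); pose proof (ha_pos j).
      replace (a j * pi j / (a j + a j)) with (pi j / 2) by (field; lra).
      intro h. assert (pi j = 0) by lra. rewrite H1, Rabs_R0 in H; lra.
    + exists (- (a j * pi j) * 1). exact Hk.
    + intros i. unfold Ttilde, ktilde. rewrite (is_series_unique _ _ Hk).
      unfold Pmat. pose proof (ha_pos i); pose proof (ha_pos j). field. lra.
  - intros i. unfold eigvec_adjoint. cbv zeta.
    assert (Hcy : forall y, in_Y X b y -> forall j, Rabs (Pmat a pi i j * y j) <= (M * C * norm_Y X b y / (b i * mu ^ i)) * mu ^ j).
    { intros y Hy j. pose proof (in_X_bound X _ hX Hy j) as HN. change (norm_X X (fun n => b n * y n)) with (norm_Y X b y) in HN.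
      set (N := norm_Y X b y) in *.
      assert (E : Pmat a pi i j = pi j * b j * phi a b i j / b i).
      { rewrite <- (P_phi a b pi ha_pos hb_pos i j). pose proof (hb_pos i). field. lra. }
      pose proof (hb_pos i); pose proof (hb_pos j); pose proof (Hmupos i); pose proof (Hmupos j).
      rewrite E. replace (pi j * b j * phi a b i j / b i * y j) with ((pi j * phi a b i j) * (b j * y j) * / b i) by (field; lra).
      cbv beta in HN. set (w := b j * y j) in *.
      rewrite !Rabs_mult, (Rabs_right (/ b i)), (Rabs_right (phi a b i j)).
      2:{ apply Rle_ge; auto. } 2:{ apply Rle_ge; left; apply Rinv_0_lt_compat; auto. }
      assert (Hph : phi a b i j <= C * (mu ^ j / mu ^ i)).
      { eapply Rle_trans; [apply hph|]. apply Rmult_le_compat_l; [lra|apply Hpow]. }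
      assert (HN0 : 0 <= N) by (eapply Rle_trans; [apply Rabs_pos|apply HN]).
      apply Rle_trans with (M * (C * (mu ^ j / mu ^ i)) * N * / b i).
      + apply Rmult_le_compat_r. left; apply Rinv_0_lt_compat; auto.
        apply Rmult_le_compat; try apply Rabs_pos. apply Rmult_le_pos; [apply Rabs_pos|apply Hphi0].
        apply Rmult_le_compat; auto. apply Rabs_pos. auto.
      + right. field. split; lra. }
    split; [|split; [|split]].
    + intros y Hy. exact (proj1 (geom_series _ _ mu hmu (Hcy y Hy))).
    + exists (M * C / (b i * mu ^ i) / (1 - mu)). intros y Hy.
      eapply Rle_trans; [apply (proj2 (geom_series _ _ mu hmu (Hcy y Hy)))|].
      pose proof (hb_pos i); pose proof (Hmupos i). right; field. repeat split; lra.
    + exists (fun n => if Nat.eq_dec n i then 1 else 0). split.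
      * unfold in_Y. apply geom_in_X with (D := b i / mu ^ i) (mu := mu); auto.
        pose proof (hb_pos i); pose proof (Hmupos i). apply Rdiv_lt_0_compat; auto.
        intros n. destruct (Nat.eq_dec n i) as [->|e].
        -- rewrite Rmult_1_r, Rabs_right. right. pose proof (Hmupos i). field; lra. left; apply hb_pos.
        -- rewrite Rmult_0_r, Rabs_R0. pose proof (hb_pos i); pose proof (Hmupos i); pose proof (Hmupos n).
           left. apply Rmult_lt_0_compat; auto. apply Rdiv_lt_0_compat; auto.
      * rewrite (is_series_unique _ _ (indicator_series (fun j => Pmat a pi i j) i)).
        unfold Pmat. pose proof (Hpi2 i); pose proof (ha_pos i).
        replace (a i * pi i / (a i + a i)) with (pi i / 2) by (field; lra).
        intro h. assert (pi i = 0) by lra. rewrite H1, Rabs_R0 in H; lra.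
    + intros y Hy.
      pose proof (Series_correct _ (proj1 (geom_series _ _ mu hmu (Hcy y Hy)))) as HF.
      set (F := Series (fun j => Pmat a pi i j * y j)) in *.
      assert (Hkb : forall n, Rabs (- a n * pi n * y n) <= (M * (2 * C * a 0%nat / b 0%nat) * norm_Y X b y) * mu ^ n).
      { intros n. pose proof (in_X_bound X _ hX Hy n) as HN. change (norm_X X (fun n => b n * y n)) with (norm_Y X b y) in HN.
        cbv beta in HN. set (N := norm_Y X b y) in *. set (w := b n * y n) in *.
        pose proof (hb_pos n). pose proof (ha_pos n).
        replace (- a n * pi n * y n) with (- (pi n) * (a n / b n) * w) by (unfold w; field; lra).
        rewrite !Rabs_mult, Rabs_Ropp, (Rabs_right (a n / b n)) by (apply Rle_ge, Rlt_le, Rdiv_lt_0_compat; auto).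
        pose proof (ab_bound a b C mu ha_pos ha_dec hb_pos hmu hph n).
        assert (HN0 : 0 <= N) by (eapply Rle_trans; [apply Rabs_pos|apply HN]).
        replace (M * (2 * C * a 0%nat / b 0%nat) * N * mu ^ n) with (M * (2 * C * a 0%nat / b 0%nat * mu ^ n) * N) by ring.
        apply Rmult_le_compat; auto. apply Rmult_le_pos. apply Rabs_pos. apply Rlt_le, Rdiv_lt_0_compat; auto. apply Rabs_pos.
        apply Rmult_le_compat; auto. apply Rabs_pos. apply Rlt_le, Rdiv_lt_0_compat; auto. }
      pose proof (Series_correct _ (proj1 (geom_series _ _ mu hmu Hkb))) as Hk.
      set (k := Series (fun n => - a n * pi n * y n)) in *.
      assert (Hc : is_series (fun j => Pmat a pi i j) 1).
      { eapply is_series_ext; [|apply (hid i)]. intros n. unfold Pmat. simpl. rewrite (Rplus_comm (a n)). reflexivity. }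
      pose proof (is_series_plus _ _ _ _ (is_series_plus _ _ _ _ (is_series_scal_l (K:=R_AbsRing) (V:=R_NormedModule) (-1) _ _ Hk)
         (is_series_scal_l (K:=R_AbsRing) (V:=R_NormedModule) (- a i) _ _ HF)) (is_series_scal_l (K:=R_AbsRing) (V:=R_NormedModule) k _ _ Hc)) as Hall.
      apply is_series_unique.
      replace (- a i * F) with (plus (plus (scal (-1) k) (scal (- a i) F)) (scal k 1)).
      2:{ repeat change (@plus _ ?x ?y) with (x + y). repeat change (@scal _ _ ?x ?y) with (x * y). match goal with |- ?l = ?r => change (@eq R l r) end. ring. }
      eapply is_series_ext; [|exact Hall]. intros j. repeat change (@plus _ ?x ?y) with (x + y). repeat change (@scal _ _ ?x ?y) with (x * y).
      match goal with |- ?l = ?r => change (@eq R l r) end.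
      unfold Ttilde, ktilde. fold k. unfold Pmat. pose proof (ha_pos i); pose proof (ha_pos j). field. lra.
Qed.
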